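(* Let Q be a strong quasi-MV* algebra. Then there exist an MV*-algebra B and a flat strong quasi-MV* algebra F such that Q can be embedded into the direct product B × F. Such an embedding is an isomorphism if Q is an MV*-algebra or Q is a flat strong quasi-MV* algebra.
   Context: An MV*-algebra is an algebra ⟨B; ⊕, −, 0, 1⟩ of type ⟨2,1,0,0⟩ satisfying: x⊕y = y⊕x; (1⊕x)⊕(y⊕(1⊕z)) = ((1⊕x)⊕y)⊕(1⊕z); x⊕(−x) = 0; (x⊕1)⊕1 = 1; x⊕0 = x; −(x⊕y) = (−x)⊕(−y); −(−x) = x; x⊕y = (x⁺⊕y⁺)⊕(x⁻⊕y⁻); (−x⊕(x⊕y))⁺ = −(x⁺)⊕(x⁺⊕y⁺); x∨y = y∨x; x∨(y∨z) = (x∨y)∨z; x⊕(y∨z) = (x⊕y)∨(x⊕z); where x⁺ = 1⊕(−1⊕x), x⁻ = −1⊕(1⊕x), and x∨y = (x⁺⊕(−x⁺⊕y⁺)⁺)⊕(x⁻⊕(−x⁻⊕y⁻)⁺). A quasi-MV* algebra is an algebra ⟨A; ⊕, −, ⁺, ⁻, 0, 1⟩ of type ⟨2,1,1,1,0,0⟩ satisfying: x⊕y = y⊕x; (1⊕x)⊕(y⊕(1⊕z)) = ((1⊕x)⊕y)⊕(1⊕z); (x⊕1)⊕1 = 1; (x⊕y)⊕0 = x⊕y; x⁺⊕0 = (x⊕0)⁺ = 1⊕(−1⊕x) and x⁻⊕0 = (x⊕0)⁻ = −1⊕(1⊕x); x⊕y = (x⁺⊕y⁺)⊕(x⁻⊕y⁻);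 0 = −0; x⊕(−x) = 0; −(x⊕y) = (−x)⊕(−y); −(−x) = x; (−x⊕(x⊕y))⁺ = −x⁺⊕(x⁺⊕y⁺); x∨y = y∨x; x∨(y∨z) = (x∨y)∨z; x⊕(y∨z) = (x⊕y)∨(x⊕z); with x∨y = (x⁺⊕(−x⁺⊕y⁺)⁺)⊕(x⁻⊕(−x⁻⊕y⁻)⁺). A strong quasi-MV* algebra is a quasi-MV* algebra satisfying x⁺ = x⁺⊕0 and x⁻ = x⁻⊕0 for all x. It is flat if it satisfies 0 = 1. Direct products carry coordinatewise operations; an embedding is an injective map preserving 0, 1, ⊕ and − (hence also ⁺ and ⁻). *)

(* Defs.v *)
Set Implicit Arguments.

Section MVstar.
Variables (A : Type) (add : A -> A -> A) (neg : A -> A) (zero one : A).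

Definition mv_pos (x : A) : A := add one (add (neg one) x).
Definition mv_negp (x : A) : A := add (neg one) (add one x).
Definition mv_join (x y : A) : A :=
  add (add (mv_pos x) (mv_pos (add (neg (mv_pos x)) (mv_pos y))))
      (add (mv_negp x) (mv_pos (add (neg (mv_negp x)) (mv_negp y)))).

Record is_MVstar : Prop := {
  mv_comm : forall x y, add x y = add y x;
  mv_assoc : forall x y z,
    add (add one x) (add y (add one z)) = add (add (add one x) y) (add one z);
  mv_one_abs : forall x, add (add x one) one = one;
  mv_inv : forall x, add x (neg x) = zero;
  mv_zero_r : forall x, add x zero = x;
  mv_neg_add : forall x y, neg (add x y) = add (neg x) (neg y);
  mv_neg_inv : forall x, neg (neg x) = x;
  mv_decomp : forall x y,
    add x y = add (add (mv_pos x) (mv_pos y)) (add (mv_negp x) (mv_negp y));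
  mv_pos_eq : forall x y,
    mv_pos (add (neg x) (add x y)) = add (neg (mv_pos x)) (add (mv_pos x) (mv_pos y));
  mv_join_comm : forall x y, mv_join x y = mv_join y x;
  mv_join_assoc : forall x y z, mv_join x (mv_join y z) = mv_join (mv_join x y) z;
  mv_join_distr : forall x y z,
    add x (mv_join y z) = mv_join (add x y) (add x z)
}.
End MVstar.

Section QMVstar.
Variables (A : Type) (add : A -> A -> A) (neg pos negp : A -> A) (zero one : A).

Definition q_join (x y : A) : A :=
  add (add (pos x) (pos (add (neg (pos x)) (pos y))))
      (add (negp x) (pos (add (neg (negp x)) (negp y)))).

Record is_qMVstar : Prop := {
  q_comm : forall x y, add x y = add y x;
  q_assoc : forall x y z,
    add (add one x) (add y (add one z)) = add (add (add one x) y) (add one z);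
  q_one_abs : forall x, add (add x one) one = one;
  q_zero_r : forall x y, add (add x y) zero = add x y;
  q_pos0 : forall x, add (pos x) zero = pos (add x zero);
  q_pos1 : forall x, pos (add x zero) = add one (add (neg one) x);
  q_negp0 : forall x, add (negp x) zero = negp (add x zero);
  q_negp1 : forall x, negp (add x zero) = add (neg one) (add one x);
  q_decomp : forall x y, add x y = add (add (pos x) (pos y)) (add (negp x) (negp y));
  q_neg_zero : zero = neg zero;
  q_inv : forall x, add x (neg x) = zero;
  q_neg_add : forall x y, neg (add x y) = add (neg x) (neg y);
  q_neg_inv : forall x, neg (neg x) = x;
  q_pos_eq : forall x y,
    pos (add (neg x) (add x y)) = add (neg (pos x)) (add (pos x) (pos y));
  q_join_comm : forall x y, q_join x y = q_join y x;
  q_join_assoc : forall x y z, q_join x (q_join y z) = q_join (q_join x y) z;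
  q_join_distr : forall x y z,
    add x (q_join y z) = q_join (add x y) (add x z)
}.

Definition is_strong : Prop :=
  (forall x, pos x = add (pos x) zero) /\ (forall x, negp x = add (negp x) zero).

Definition is_flat : Prop := zero = one.
End QMVstar.

Definition is_embedding_prod (A B F : Type)
  (addA : A -> A -> A) (negA : A -> A) (zA oA : A)
  (addB : B -> B -> B) (negB : B -> B) (zB oB : B)
  (addF : F -> F -> F) (negF : F -> F) (zF oF : F)
  (f : A -> B * F) : Prop :=
  (forall x y, f x = f y -> x = y) /\
  f zA = (zB, zF) /\
  f oA = (oB, oF) /\
  (forall x y, f (addA x y) = (addB (fst (f x)) (fst (f y)), addF (snd (f x)) (snd (f y)))) /\
  (forall x, f (negA x) = (negB (fst (f x)), negF (snd (f x)))).

(* Main.v *)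
Require Import Defs.
From Stdlib Require Import ClassicalEpsilon ProofIrrelevance.

Lemma sig_eqP (A : Type) (P : A -> Prop) (a b : {x : A | P x}) :
  proj1_sig a = proj1_sig b -> a = b.
Proof.
  destruct a as [a pa], b as [b pb]; simpl; intros ->.
  f_equal; apply proof_irrelevance.
Qed.

Theorem proposition3p1 (A : Type) (add : A -> A -> A) (neg pos negp : A -> A)
    (zero one : A) :
  is_qMVstar add neg pos negp zero one ->
  is_strong add pos negp zero ->
  exists (B : Type) (addB : B -> B -> B) (negB : B -> B) (zB oB : B),
    is_MVstar addB negB zB oB /\
  exists (F : Type) (addF : F -> F -> F) (negF posF negpF : F -> F) (zF oF : F),
    is_qMVstar addF negF posF negpF zF oF /\
    is_strong addF posF negpF zF /\
    is_flat zF oF /\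
  exists f : A -> B * F,
    is_embedding_prod add neg zero one addB negB zB oB addF negF zF oF f /\
    ((is_MVstar add neg zero one \/ is_flat zero one) ->
       forall p : B * F, exists x : A, f x = p).
Proof.
  intros H [S1 S2].
  assert (zz : add zero zero = zero).
  { pose proof (q_zero_r H one (neg one)) as E. rewrite (q_inv H) in E. exact E. }
  assert (oreg : add one zero = one).
  { pose proof (q_zero_r H (add one one) one) as E. rewrite (q_one_abs H) in E. exact E. }
  assert (nz : neg zero = zero) by (symmetry; apply (q_neg_zero H)).
  assert (nreg : forall x, add (neg x) zero = neg (add x zero)).
  { intros x. rewrite (q_neg_add H), nz. reflexivity. }
  assert (posE : forall x, pos x = add one (add (neg one) x)).
  { intros x. rewrite S1, (q_pos0 H), (q_pos1 H). reflexivity. }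
  assert (negpE : forall x, negp x = add (neg one) (add one x)).
  { intros x. rewrite S2, (q_negp0 H), (q_negp1 H). reflexivity. }
  assert (sumr : forall x y, add (add x zero) (add y zero) = add x y).
  { intros x y. rewrite (q_decomp H (add x zero)), (q_decomp H x y).
    rewrite <- !(q_pos0 H), <- !(q_negp0 H), <- !S1, <- !S2. reflexivity. }
  assert (joinE : forall x y, q_join add neg pos negp x y = mv_join add neg one x y).
  { intros x y. unfold q_join, mv_join, mv_pos, mv_negp. rewrite !posE, !negpE.
    reflexivity. }
  set (B := {x : A | add x zero = x}).
  set (addB := fun a b : B => exist (fun x => add x zero = x)
                 (add (proj1_sig a) (proj1_sig b)) (q_zero_r H _ _)).
  set (negB := fun a : B => exist (fun x => add x zero = x) (neg (proj1_sig a))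
                 (eq_trans (nreg _) (f_equal neg (proj2_sig a)))).
  set (zB := exist (fun x => add x zero = x) zero zz).
  set (oB := exist (fun x => add x zero = x) one oreg).
  exists B, addB, negB, zB, oB.
  split.
  { constructor; intros; apply sig_eqP; simpl.
    - apply (q_comm H).
    - apply (q_assoc H).
    - apply (q_one_abs H).
    - apply (q_inv H).
    - apply (proj2_sig x).
    - apply (q_neg_add H).
    - apply (q_neg_inv H).
    - pose proof (q_decomp H (proj1_sig x) (proj1_sig y)) as E.
      rewrite !posE, !negpE in E. exact E.
    - pose proof (q_pos_eq H (proj1_sig x) (proj1_sig y)) as E.
      rewrite !posE in E. exact E.
    - pose proof (q_join_comm H (proj1_sig x) (proj1_sig y)) as E.
      rewrite !joinE in E. exact E.
    - pose proof (q_join_assoc H (proj1_sig x) (proj1_sig y) (proj1_sig z)) as E.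
      rewrite !joinE in E. exact E.
    - pose proof (q_join_distr H (proj1_sig x) (proj1_sig y) (proj1_sig z)) as E.
      rewrite !joinE in E. exact E. }
  set (PF := fun x => add x zero <> x \/ x = zero).
  set (F := {x : A | PF x}).
  set (zF := exist PF zero (or_intror eq_refl)).
  assert (negPF : forall x, PF x -> PF (neg x)).
  { intros x [h|h]; [left|right].
    - intros E. apply h. rewrite nreg in E. rewrite <- (q_neg_inv H (add x zero)), E.
      apply (q_neg_inv H).
    - rewrite h; exact nz. }
  set (negF := fun a : F => exist PF (neg (proj1_sig a)) (negPF _ (proj2_sig a))).
  set (addF := fun _ _ : F => zF).
  set (cF := fun _ : F => zF).
  exists F, addF, negF, cF, cF, zF, zF.
  split.
  { constructor; intros; try reflexivity; apply sig_eqP; simpl; auto.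
    apply (q_neg_inv H). }
  split. { split; reflexivity. }
  split. { reflexivity. }
  set (g := fun x => match excluded_middle_informative (add x zero = x) with
                     | left _ => zF
                     | right h => exist PF x (or_introl h) end).
  assert (gR : forall x, add x zero = x -> g x = zF).
  { intros x h. unfold g. destruct (excluded_middle_informative _); [reflexivity|contradiction]. }
  assert (gI : forall x (h : add x zero <> x), g x = exist PF x (or_introl h)).
  { intros x h. unfold g. destruct (excluded_middle_informative _); [contradiction|].
    apply sig_eqP; reflexivity. }
  set (r := fun x => exist (fun y => add y zero = y) (add x zero) (q_zero_r H x zero) : B).
  exists (fun x => (r x, g x)).
  split.
  { split; [|split; [|split; [|split]]].
    - intros x y E. injection E as E1 E2.
      destruct (excluded_middle_informative (add x zero = x)) as [hx|hx];
      destruct (excluded_middle_informative (add y zero = y)) as [hy|hy].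
      + congruence.
      + rewrite (gR _ hx), (gI _ hy) in E2. apply (f_equal (@proj1_sig _ _)) in E2.
        simpl in E2. subst y. contradiction.
      + rewrite (gR _ hy), (gI _ hx) in E2. apply (f_equal (@proj1_sig _ _)) in E2.
        simpl in E2. subst x. contradiction.
      + rewrite (gI _ hy), (gI _ hx) in E2. apply (f_equal (@proj1_sig _ _)) in E2.
        exact E2.
    - f_equal; [apply sig_eqP; exact zz | apply gR, zz].
    - f_equal; [apply sig_eqP; exact oreg | apply gR, oreg].
    - intros x y. f_equal; [apply sig_eqP; simpl; rewrite sumr; apply (q_zero_r H)
                           | apply gR, (q_zero_r H)].
    - intros x. f_equal; [apply sig_eqP; simpl; apply nreg|].
      destruct (excluded_middle_informative (add x zero = x)) as [hx|hx].
      + rewrite (gR _ hx), gR. apply sig_eqP; simpl; auto.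
        rewrite nreg, hx; reflexivity.
      + assert (hn : add (neg x) zero <> neg x).
        { destruct (negPF x (or_introl hx)) as [h|h]; auto.
          exfalso. apply hx. rewrite <- (q_neg_inv H x), h, nz. exact zz. }
        rewrite (gI _ hx), (gI _ hn). apply sig_eqP; reflexivity. }
  intros [Hmv|Hfl] [b c].
  - exists (proj1_sig b). f_equal.
    + apply sig_eqP; simpl. apply (proj2_sig b).
    + rewrite gR by apply (proj2_sig b). destruct c as [c [hc|hc]].
      * exfalso. apply hc, (mv_zero_r Hmv).
      * apply sig_eqP; simpl; auto.
  - assert (fl : forall x, add x zero = zero).
    { intros x. pose proof (q_one_abs H x) as E. unfold is_flat in Hfl.
      rewrite <- Hfl in E. rewrite (q_zero_r H) in E. exact E. }
    assert (hb : b = zB).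
    { apply sig_eqP. simpl. rewrite <- (proj2_sig b). apply fl. }
    subst b. destruct c as [c [hc|hc]].
    + exists c. f_equal.
      * apply sig_eqP; simpl; apply fl.
      * rewrite (gI _ hc). apply sig_eqP; reflexivity.
    + exists zero. f_equal.
      * apply sig_eqP; simpl; apply zz.
      * rewrite gR by exact zz. apply sig_eqP; simpl; auto.
Qed.
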